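(* Let $R$ be a noncommutative division algebra over a field $F$. Then for every positive integer $n$ there exist elements $\alpha,\beta\in R$ such that $(\alpha\beta)^n\neq(\beta\alpha)^n$. *)

(* Defs.v *)
From mathcomp Require Import all_boot all_algebra.
Set Implicit Arguments. Unset Strict Implicit. Unset Printing Implicit Defensive.
Import GRing.Theory.
Local Open Scope ring_scope.

Definition is_division_ring (R : unitRingType) : Prop :=
  forall x : R, x != 0 -> x \is a GRing.unit.

Definition noncommutative (R : unitRingType) : Prop :=
  exists x y : R, x * y != y * x.

(* Main.v *)
Require Import Defs.
From mathcomp Require Import all_boot all_algebra.
Import GRing.Theory.
Local Open Scope ring_scope.

From HB Require Import structures.
From mathcomp Require Import finfield.
From Stdlib Require Import Classical.

Section FinSub.
Variable R : unitRingType.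
Hypothesis hdivR : forall x : R, x != 0 -> x \is a GRing.unit.
Variable s : seq R.
Hypothesis s1 : 1 \in s.
Hypothesis sB : {in s &, forall x y, x - y \in s}.
Hypothesis sM : {in s &, forall x y, x * y \in s}.
Hypothesis sV : {in s, forall x, x^-1 \in s}.

Lemma s0 : 0 \in s. Proof. by rewrite -(subrr 1) sB. Qed.
Lemma sN x : x \in s -> - x \in s. Proof. by move=> xs; rewrite -sub0r sB // s0. Qed.
Lemma sD x y : x \in s -> y \in s -> x + y \in s.
Proof. by move=> xs ys; rewrite -[y]opprK sB // sN. Qed.

Definition FT := seq_sub s.
HB.instance Definition _ := Finite.copy FT (seq_sub s).
Definition ft0 : FT := SeqSub s0.
Definition ft1 : FT := SeqSub s1.
Definition ftopp (x : FT) : FT := SeqSub (@sN (ssval x) (ssvalP x)).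
Definition ftadd (x y : FT) : FT := SeqSub (@sD (ssval x) (ssval y) (ssvalP x) (ssvalP y)).
Definition ftmul (x y : FT) : FT := SeqSub (@sM (ssval x) (ssval y) (ssvalP x) (ssvalP y)).
Definition ftinv (x : FT) : FT := SeqSub (@sV (ssval x) (ssvalP x)).

Lemma ftaddA : associative ftadd.
Proof. by move=> x y z; apply: val_inj; rewrite /= addrA. Qed.
Lemma ftaddC : commutative ftadd.
Proof. by move=> x y; apply: val_inj; rewrite /= addrC. Qed.
Lemma ftadd0 : left_id ft0 ftadd.
Proof. by move=> x; apply: val_inj; rewrite /= add0r. Qed.
Lemma ftaddN : left_inverse ft0 ftopp ftadd.
Proof. by move=> x; apply: val_inj; rewrite /= addNr. Qed.
HB.instance Definition _ := GRing.isZmodule.Build FT ftaddA ftaddC ftadd0 ftaddN.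

Lemma ftmulA : associative ftmul.
Proof. by move=> x y z; apply: val_inj; rewrite /= mulrA. Qed.
Lemma ftmul1 : left_id ft1 ftmul.
Proof. by move=> x; apply: val_inj; rewrite /= mul1r. Qed.
Lemma ftmulr1 : right_id ft1 ftmul.
Proof. by move=> x; apply: val_inj; rewrite /= mulr1. Qed.
Lemma ftmulDl : left_distributive ftmul ftadd.
Proof. by move=> x y z; apply: val_inj; rewrite /= mulrDl. Qed.
Lemma ftmulDr : right_distributive ftmul ftadd.
Proof. by move=> x y z; apply: val_inj; rewrite /= mulrDr. Qed.
Lemma ft1_neq0 : ft1 != ft0.
Proof. by apply/eqP => /(congr1 val) /= /eqP; rewrite oner_eq0. Qed.
HB.instance Definition _ := GRing.Zmodule_isNzRing.Build FT
  ftmulA ftmul1 ftmulr1 ftmulDl ftmulDr ft1_neq0.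

Lemma ftval0 : val (0 : FT) = 0. Proof. by []. Qed.
Lemma ftvalM (x y : FT) : val (x * y) = val x * val y. Proof. by []. Qed.

Definition ftunit : pred FT := fun x => x != 0.
Lemma ftmulV : {in ftunit, left_inverse 1 ftinv *%R}.
Proof.
move=> x x0; have v0 : val x != 0.
  by apply: contra x0 => /eqP x0; apply/eqP/val_inj.
by apply: val_inj; rewrite /= mulVr // hdivR.
Qed.
Lemma ftdivrr : {in ftunit, right_inverse 1 ftinv *%R}.
Proof.
move=> x x0; have v0 : val x != 0.
  by apply: contra x0 => /eqP x0; apply/eqP/val_inj.
by apply: val_inj; rewrite /= mulrV // hdivR.
Qed.
Lemma ftunitP : forall x y : FT, y * x = 1 /\ x * y = 1 -> ftunit x.
Proof.
move=> x y [_ xy]; apply/eqP => x0; move: xy; rewrite x0 mul0r => /eqP.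
by rewrite eq_sym oner_eq0.
Qed.
Lemma ftinv_out : {in [predC ftunit], ftinv =1 id}.
Proof.
move=> x; rewrite !inE /ftunit negbK => /eqP ->; apply: val_inj.
by rewrite /= invr0.
Qed.
HB.instance Definition _ := GRing.NzRing_hasMulInverse.Build FT
  ftmulV ftdivrr ftunitP ftinv_out.

Lemma ftdom : GRing.integral_domain_axiom FT.
Proof.
move=> x y /(congr1 val) /= xy.
case: (eqVneq x 0) => // /ftmulV xu; apply/orP; right.
by rewrite -[y]mul1r -xu -mulrA; apply/eqP; apply: val_inj; rewrite /= xy mulr0.
Qed.


Lemma fin_sub_comm : {in s &, forall x y, x * y = y * x}.
Proof.
move=> x y xs ys.
have := finDomain_mulrC ftdom (SeqSub xs) (SeqSub ys).
by move/(congr1 val).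
Qed.


Definition KF := FinDomainFieldType ftdom.
Definition kval (x : KF) : R := ssval x.
Lemma kval_zmod : zmod_morphism kval. Proof. by []. Qed.
HB.instance Definition _ := GRing.isZmodMorphism.Build KF R kval kval_zmod.
Lemma kval_mult : monoid_morphism kval. Proof. by []. Qed.
HB.instance Definition _ := GRing.isMonoidMorphism.Build KF R kval kval_mult.

Lemma fin_sub_genPoly a : a \in s -> exists Q (l : seq R),
  [/\ forall x, x \in s -> x ^+ Q = x, all (fun x => (x \in s) && (x != a)) l &
      'X^Q - 'X = (\prod_(x <- l) ('X - x%:P)) * ('X - a%:P)].
Proof.
move=> as_; pose a' : KF := SeqSub as_.
exists #|KF|, (map kval [seq i <- index_enum KF | i != a']); split.
- by move=> x xs; have := expf_card (SeqSub xs : KF) => /(congr1 kval); rewrite rmorphXn.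
- apply/allP => x /mapP [y]; rewrite mem_filter => /andP [ya _] ->.
  rewrite (ssvalP y) /=.
  by apply: contra ya => /eqP ya; apply/eqP/val_inj.
have := finField_genPoly KF; rewrite (bigD1 a') //= mulrC => /(congr1 (map_poly kval)).
rewrite rmorphB rmorphM /= rmorphXn /= map_polyX => ->.
rewrite rmorphB /= map_polyX map_polyC /= rmorph_prod big_map /=.
congr (_ * _); rewrite big_filter.
by apply: eq_bigr => x _; rewrite rmorphB /= map_polyX map_polyC.
Qed.

End FinSub.
Section Span.
Variable R : unitRingType.
Variables (N' : nat) (C : seq R) (g : R).
Local Notation N := N'.+1.
Hypothesis gN : g ^+ N = 1.
Hypothesis gU : g \is a GRing.unit.
Hypothesis C0 : 0 \in C.
Hypothesis CD : {in C &, forall x y, x + y \in C}.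
Hypothesis CM : {in C &, forall x y, x * y \in C}.
Hypothesis Cg : {in C, forall c, g * c * g^-1 \in C}.

Definition spf (u : {ffun 'I_N -> seq_sub C}) : R :=
  \sum_(j < N) ssval (u j) * g ^+ j.
Definition SP := codom spf.

Lemma SP_D x y : x \in SP -> y \in SP -> x + y \in SP.
Proof.
move=> /codomP [u ->] /codomP [v ->]; apply/codomP.
exists [ffun j => SeqSub (CD _ _ (ssvalP (u j)) (ssvalP (v j)))].
by rewrite /spf -big_split /=; apply: eq_bigr => j _; rewrite ffunE /= mulrDl.
Qed.

Lemma SP_0 : 0 \in SP.
Proof.
apply/codomP; exists [ffun j => SeqSub C0].
by rewrite /spf big1 // => j _; rewrite ffunE /= mul0r.
Qed.

Lemma SP_sum (I : Type) (r : seq I) (P : pred I) (F : I -> R) :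
  (forall i, P i -> F i \in SP) -> \sum_(i <- r | P i) F i \in SP.
Proof. by move=> FS; apply: (big_ind (fun x => x \in SP)) => //; [exact: SP_0 | exact: SP_D]. Qed.

Lemma SP_C c : c \in C -> c \in SP.
Proof.
move=> cC; apply/codomP.
exists [ffun j : 'I_N => if j == ord0 then SeqSub cC else SeqSub C0].
rewrite /spf big_ord_recl ffunE eqxx /= expr0 mulr1 big1 ?addr0 // => j _.
by rewrite ffunE /= mul0r.
Qed.

Lemma SP_Cmul c z : c \in C -> z \in SP -> c * z \in SP.
Proof.
move=> cC /codomP [u ->]; apply/codomP.
exists [ffun j => SeqSub (CM _ _ cC (ssvalP (u j)))].
by rewrite /spf mulr_sumr; apply: eq_bigr => j _; rewrite ffunE /= mulrA.
Qed.

Lemma SP_gmul z : z \in SP -> g * z \in SP.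
Proof.
move=> /codomP [u ->]; apply/codomP.
pose D j := SeqSub (Cg _ (ssvalP (u j))).
exists [ffun j : 'I_N => if unlift ord0 j is Some k then D (widen_ord (leqnSn _) k)
                        else D ord_max].
rewrite /spf mulr_sumr big_ord_recr big_ord_recl /= ffunE unlift_none /=.
rewrite expr0 mulr1 addrC; congr (_ + _).
  have gi : g ^+ N' = g^-1 by rewrite -[RHS]mulr1 -gN exprS mulKr.
  by rewrite gi mulrA.
apply: eq_bigr => j _; rewrite ffunE liftK /= /bump /= add1n exprS !mulrA mulrVK //.
Qed.

Lemma SP_gXmul k z : z \in SP -> g ^+ k * z \in SP.
Proof.
move=> zS; elim: k => [|k IH]; first by rewrite expr0 mul1r.
by rewrite exprS -mulrA SP_gmul.
Qed.

Lemma SP_M x z : x \in SP -> z \in SP -> x * z \in SP.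
Proof.
move=> /codomP [u ->] zS; rewrite /spf mulr_suml; apply: SP_sum => j _.
by rewrite -mulrA SP_Cmul ?(ssvalP (u j)) ?SP_gXmul.
Qed.

Lemma SP_X x k : 1 \in C -> x \in SP -> x ^+ k \in SP.
Proof.
move=> C1 xS; elim: k => [|k IH]; first by rewrite expr0 SP_C.
by rewrite exprS SP_M.
Qed.

Lemma SP_g : 1 \in C -> g \in SP.
Proof. by move=> C1; rewrite -[g]mulr1 SP_gmul ?SP_C. Qed.

Lemma SP_Mn x k : x \in SP -> x *+ k \in SP.
Proof.
move=> xS; elim: k => [|k IH]; first by rewrite mulr0n SP_0.
by rewrite mulrS SP_D.
Qed.

Lemma SP_N p x : (0 < p)%N -> (p%:R = 0 :> R) -> x \in SP -> - x \in SP.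
Proof.
move=> p_gt0 p0 xS; have -> : - x = x *+ p.-1.
  case: p p_gt0 p0 => [//|p] _ p0.
  by apply/eqP; rewrite eq_sym -addr_eq0 -mulrSr -mulr_natr p0 mulr0.
exact: SP_Mn.
Qed.

End Span.
Section Phi.
Variable R : nzRingType.
Variable a : R.

Lemma horner_mul_const (F G : {poly R}) : (F * G).[a] = (F * (G.[a])%:P).[a].
Proof.
elim/poly_ind: F => [|F c IH]; first by rewrite !mul0r.
rewrite !mulrDl !hornerD -!mulrA -(commr_polyX G) -(commr_polyX (G.[a])%:P).
rewrite !mulrA !hornerMX IH !hornerCM; congr (_ + _).
by rewrite hornerC.
Qed.

Definition phi (F : {poly R}) (w : R) := (F * w%:P).[a].

Lemma phiM F G w : phi (F * G) w = phi F (phi G w).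
Proof. by rewrite /phi -mulrA horner_mul_const. Qed.

Lemma phi_lin c w : phi ('X - c%:P) w = w * a - c * w.
Proof.
rewrite /phi mulrBl hornerD hornerN -polyCM hornerC; congr (_ - _).
by rewrite -commr_polyX hornerMX hornerC.
Qed.

Lemma phi_XQ Q w : phi ('X^Q - 'X) w = w * (a ^+ Q - a).
Proof.
rewrite /phi mulrBl -commr_polyXn -commr_polyX -mulrBr hornerCM.
by rewrite hornerD hornerN hornerXn hornerX.
Qed.

Lemma phi_eigen (l : seq R) v : v != 0 ->
  phi (\prod_(x <- l) ('X - x%:P)) v = 0 ->
  exists2 x, x \in l & exists2 y, y != 0 & y * a = x * y.
Proof.
elim: l v => [|x l IH] v v0.
  by rewrite big_nil /phi mul1r hornerC => /eqP; rewrite (negbTE v0).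
rewrite big_cons phiM; set z := phi _ v.
case: (eqVneq z 0) => [z0 _ | z0].
  by have [y yl yP] := IH v v0 z0; exists y => //; rewrite inE yl orbT.
rewrite phi_lin => /eqP; rewrite subr_eq0 => /eqP zP.
by exists x; [rewrite inE eqxx | exists z].
Qed.

End Phi.

Arguments SP [R] N' C g.
Arguments phi {R}. Arguments phiM {R}. Arguments phi_lin {R}. Arguments phi_XQ {R}.
Arguments phi_eigen {R}.
Arguments SP_D {R N' C g}. Arguments SP_0 {R N' C g}. Arguments SP_sum {R N' C g}.
Arguments SP_C {R N' C g}. Arguments SP_Cmul {R N' C g}. Arguments SP_gmul {R N' C g}.
Arguments SP_M {R N' C g}. Arguments SP_X {R N' C g}. Arguments SP_g {R N' C g}.
Arguments SP_N {R N' C g}. Arguments SP_Mn {R N' C g}.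

Section CaseII.
Variable R : unitRingType.
Hypothesis hdiv : forall x : R, x != 0 -> x \is a GRing.unit.
Variables (p N' : nat).
Hypothesis p_gt0 : (0 < p)%N.
Hypothesis p0 : p%:R = 0 :> R.
Hypothesis hN : forall x : R, x != 0 -> x ^+ N'.+1 = 1.

Lemma SP_pack (C : seq R) (g : R) : g != 0 -> 0 \in C -> 1 \in C ->
  {in C &, forall x y, x + y \in C} -> {in C &, forall x y, x * y \in C} ->
  {in C, forall c, g * c * g^-1 \in C} ->
  [/\ 1 \in SP N' C g, {in SP N' C g &, forall x y, x - y \in SP N' C g},
      {in SP N' C g &, forall x y, x * y \in SP N' C g},
      {in SP N' C g, forall x, x^-1 \in SP N' C g} &
      {subset C <= SP N' C g} /\ g \in SP N' C g].
Proof.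
move=> g0 C0 C1 CD CM Cg.
have gN := hN _ g0; have gU := hdiv _ g0.
split.
- exact: SP_C.
- by move=> x y xS yS; rewrite SP_D // (SP_N C0 CD p _ p_gt0 p0).
- by move=> x y xS yS; rewrite SP_M.
- move=> x xS; case: (eqVneq x 0) => [->|x0]; first by rewrite invr0 SP_0.
  have -> : x^-1 = x ^+ N'.
    by rewrite -[LHS]mulr1 -(hN _ x0) exprS mulKr // hdiv.
  exact: SP_X.
- by split; [move=> c cC; exact: SP_C | exact: SP_g].
Qed.

Definition Fp : seq R := [seq (i%:R : R) | i <- iota 0 p].

Lemma natr_modp k : (k %% p)%:R = k%:R :> R.
Proof. by rewrite [in RHS](divn_eq k p) natrD natrM p0 mulr0 add0r. Qed.

Lemma Fp_nat k : k%:R \in Fp.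
Proof. by rewrite -natr_modp; apply: map_f; rewrite mem_iota add0n ltn_pmod. Qed.

Lemma Fp_facts : [/\ 0 \in Fp, 1 \in Fp, {in Fp &, forall x y, x + y \in Fp},
   {in Fp &, forall x y, x * y \in Fp} &
   forall g, g != 0 -> {in Fp, forall c, g * c * g^-1 \in Fp}].
Proof.
split; first exact: (Fp_nat 0); first exact: (Fp_nat 1).
- by move=> x y /mapP [i _ ->] /mapP [j _ ->]; rewrite -natrD Fp_nat.
- by move=> x y /mapP [i _ ->] /mapP [j _ ->]; rewrite -natrM Fp_nat.
move=> g g0 c /mapP [i _ ->]; rewrite (commr_nat g i) mulrK ?Fp_nat //.
exact: hdiv.
Qed.

Lemma caseII : forall a b : R, a * b = b * a.
Proof.
move=> a b; case: (eqVneq (a * b) (b * a)) => // nab; exfalso.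
have a0 : a != 0 by apply: contraNneq nab => ->; rewrite mul0r mulr0.
have [F0 F1 FD FM FC] := Fp_facts.
pose K := SP N' Fp a.
have [K1 KB KM KV [FK aK]] := @SP_pack Fp a a0 F0 F1 FD FM (FC a a0).
have K0 : 0 \in K by rewrite -(subrr 1) KB.
have KD : {in K &, forall x y, x + y \in K}.
  by move=> x y xK yK; rewrite -[y]opprK KB // -sub0r KB.
have [Q [l [hQ hl hpoly]]] := @fin_sub_genPoly R hdiv K K1 KB KM KV a aK.
pose v := b * a - a * b.
have v0 : v != 0 by rewrite subr_eq0 eq_sym.
have : phi a (\prod_(x <- l) ('X - x%:P)) v = 0.
  rewrite /v -phi_lin -phiM -hpoly phi_XQ hQ // subrr mulr0 //.
move=> /(phi_eigen a _ _ v0) [mu mul [y y0 ymu]].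
have /andP [muK mua] := allP hl mu mul.
have yU := hdiv _ y0.
have yaj j : y * a ^+ j = mu ^+ j * y.
  elim: j => [|j IH]; first by rewrite !expr0 mulr1 mul1r.
  by rewrite exprSr mulrA IH -mulrA ymu mulrA -exprSr.
have Kg : {in K, forall c, y * c * y^-1 \in K}.
  move=> c /codomP [u ->]; rewrite /spf mulr_sumr mulr_suml; apply: (SP_sum F0 FD) => j _.
  have /mapP [i _ ui] := ssvalP (u j).
  rewrite ui mulrA (commr_nat y i) -!mulrA [y * (a ^+ j * _)]mulrA yaj mulrK //.
  apply: KM; first by apply: FK; exact: Fp_nat.
  exact: (SP_X (hN _ a0) (hdiv _ a0) F0 FD FM (FC a a0) _ _ F1 muK).
have [S1 SB SM SV [KS yS]] := @SP_pack K y y0 K0 K1 KD KM Kg.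
have := @fin_sub_comm R hdiv (SP N' K y) S1 SB SM SV a y (KS a aK) yS.
rewrite ymu => /(mulIr yU) ay.
by rewrite ay eqxx in mua.
Qed.

End CaseII.

Lemma frob_iter {S : nzRingType} {p} (pc : p \in [pchar S]) v (x y : S) :
  GRing.comm x y -> (x + y) ^+ (p ^ v) = x ^+ (p ^ v) + y ^+ (p ^ v).
Proof.
move=> cxy; elim: v => [|v IH]; first by rewrite expn0 !expr1.
rewrite expnSr !exprM IH -!(pFrobenius_autE pc) pFrobenius_autD_comm //.
exact/commrX/commr_sym/commrX/commr_sym.
Qed.

Lemma frob_iterN {S : nzRingType} {p} (pc : p \in [pchar S]) v (y : S) :
  (- y) ^+ (p ^ v) = - y ^+ (p ^ v).
Proof.
have q0 : (p ^ v != 0)%N.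
  by rewrite -lt0n expn_gt0 prime_gt0 //; case/andP: pc.
have := frob_iter pc v y (- y) (commrN (commr_refl y)).
rewrite subrr expr0n (negbTE q0) => /esym /eqP; rewrite addrC addr_eq0.
by move/eqP.
Qed.

Definition ad {R : nzRingType} (a w : R) := a * w - w * a.
Lemma ad_formula (R : nzRingType) (a w : R) j :
  iter j (ad a) w = \sum_(0 <= i < j.+1) a ^+ (j - i) * w * (- a) ^+ i *+ 'C(j, i).
Proof.
elim: j => [|j IH]; first by rewrite big_nat1 /= expr0 mul1r mulr1.
rewrite iterS IH /ad mulr_sumr mulr_suml.
set A := \sum_(0 <= i < j) a ^+ (j - i) * w * (- a) ^+ i.+1 *+ 'C(j, i.+1).
set B := \sum_(0 <= i < j.+1) a ^+ (j - i) * w * (- a) ^+ i.+1 *+ 'C(j, i).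
have e1 : \sum_(0 <= i < j.+1) a * (a ^+ (j - i) * w * (- a) ^+ i *+ 'C(j, i))
    = a ^+ j.+1 * w + A.
  rewrite big_nat_recl // subn0 bin0 mulr1n expr0 mulr1 mulrA -exprS; congr (_ + _).
  apply: eq_big_nat => i /andP [_ ij].
  by rewrite -mulrnAr !mulrA -exprS subnSK // mulrnAr.
have e2 : \sum_(0 <= i < j.+1) (a ^+ (j - i) * w * (- a) ^+ i *+ 'C(j, i)) * a = - B.
  rewrite -sumrN; apply: eq_big_nat => i _.
  rewrite -mulrnAl exprSr !mulrN -mulNrn opprK.
  by rewrite !mulrA -!mulrnAl.
have e3 : \sum_(0 <= i < j.+2) a ^+ (j.+1 - i) * w * (- a) ^+ i *+ 'C(j.+1, i)
    = a ^+ j.+1 * w + B + A.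
  rewrite big_nat_recl // subn0 bin0 mulr1n expr0 mulr1 -addrA; congr (_ + _).
  rewrite (eq_bigr (fun i => a ^+ (j - i) * w * (- a) ^+ i.+1 *+ 'C(j, i) +
     a ^+ (j - i) * w * (- a) ^+ i.+1 *+ 'C(j, i.+1))); last first.
    by move=> i _; rewrite binS mulrnDr subSS addrC.
  rewrite big_split /=; congr (_ + _).
  by rewrite big_nat_recr //= bin_small // mulr0n addr0.
by rewrite e1 e2 e3 opprK addrAC.
Qed.

Lemma ad_p (R : nzRingType) p (pc : p \in [pchar R]) (a w : R) :
  iter p (ad a) w = ad (a ^+ p) w.
Proof.
have pp : prime p by case/andP: pc.
rewrite ad_formula; case: p pc pp => [//|p] pc pp.
rewrite big_nat_recr // big_nat_recl // subn0 bin0 mulr1n expr0 mulr1 subnn.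
rewrite expr0 mul1r binn mulr1n big1_seq ?add0r.
  rewrite /= addr0 /ad.
  by rewrite -[in (- a) ^+ _](expn1 p.+1) (frob_iterN pc) expn1 mulrN.
move=> i /andP [_]; rewrite mem_index_iota => /andP [_ ip].
have /eqP C0 : ('C(p.+1, i.+1)%:R == 0 :> R).
  by rewrite -(dvdn_pcharf pc) prime_dvd_bin.
by rewrite -mulr_natr C0 mulr0.
Qed.

Lemma ad_iter (R : nzRingType) p (pc : p \in [pchar R]) v (a w : R) :
  iter (p ^ v) (ad a) w = ad (a ^+ (p ^ v)) w.
Proof.
elim: v w => [|v IH] w; first by rewrite expn0 expr1.
rewrite expnS iterM (eq_iter IH) ad_p // -exprM mulnC //.
Qed.

Lemma uniq_roots_central (R : unitRingType) (hdiv : forall x : R, x != 0 -> x \is a GRing.unit)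
  (rs : seq R) : uniq rs -> (forall t, t \in rs -> forall z, t * z = z * t) -> uniq_roots rs.
Proof.
elim: rs => [//|x rs IH] /= /andP [xn urs] cen; apply/andP; split; last first.
  by apply: IH => // t tr; apply: cen; rewrite inE tr orbT.
apply/allP => y yr; apply/andP; split; first by rewrite cen ?mem_head.
apply: hdiv; rewrite subr_eq0; apply: contraNneq xn => <-; done.
Qed.

Section CaseI.
Variable R : unitRingType.
Hypothesis hdiv : forall x : R, x != 0 -> x \is a GRing.unit.
Variables q m : nat.
Hypothesis q_gt0 : (0 < q)%N.
Hypothesis frob : forall x y : R, GRing.comm x y -> (x + y) ^+ q = x ^+ q + y ^+ q.
Hypothesis adq : forall a w : R, iter q (ad a) w = ad (a ^+ q) w.
Hypothesis m0 : m%:R != 0 :> R.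
Hypothesis hC : forall x y : R, x ^+ (q * m) * y = y * x ^+ (q * m).
Variable ts : seq R.
Hypothesis ts_uniq : uniq ts.
Hypothesis ts_size : (m < size ts)%N.
Hypothesis ts_c : forall t, t \in ts -> forall z, t * z = z * t.

Lemma negq (x : R) : (- x) ^+ q = - x ^+ q.
Proof.
have := frob x (- x) (commrN (commr_refl x)); rewrite subrr expr0n.
rewrite (negbTE (lt0n_neq0 q_gt0)) => /esym /eqP; rewrite addrC addr_eq0.
by move/eqP.
Qed.

Lemma powq_neq0 (d : R) : d != 0 -> d ^+ q != 0.
Proof.
move=> d0; apply: contraTneq (unitrX q (hdiv _ d0)) => ->.
by rewrite unitr0.
Qed.

Lemma qinj (t t' : R) : GRing.comm t t' -> t ^+ q = t' ^+ q -> t = t'.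
Proof.
move=> ctt e; apply/eqP; rewrite -subr_eq0; apply/negPn/negP => /powq_neq0.
by rewrite frob ?negq ?e ?subrr ?eqxx //; apply: commrN.
Qed.

Lemma qcentral (x y : R) : x ^+ q * y = y * x ^+ q.
Proof.
pose b := x ^+ q.
pose E j := (b ^+ (m - j) * y - y * b ^+ (m - j)) *+ 'C(m, j).
pose P := \poly_(j < m.+1) E j.
pose rs := [seq t ^+ q | t <- ts].
have rs_c : forall s, s \in rs -> forall z, s * z = z * s.
  move=> s /mapP [t tt ->] z; apply: commr_sym; apply: commrX.
  by apply: commr_sym; apply: ts_c.
have Proot : all (root P) rs.
  apply/allP => s sr; have /mapP [t tt st] := sr; rewrite /root.
  rewrite horner_poly.
  have e1 : (b + s) ^+ m * y - y * (b + s) ^+ m = \sum_(j < m.+1) E j * s ^+ j.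
    rewrite exprDn_comm; last by apply: commr_sym; apply: rs_c.
    rewrite mulr_suml mulr_sumr -sumrB; apply: eq_bigr => j _.
    rewrite /E mulrnAl mulrnAr -mulrnBl mulrnAl; congr (_ *+ _).
    have hs : s ^+ j * y = y * s ^+ j.
      apply: commr_sym; apply: commrX; apply: commr_sym; exact: rs_c.
    by rewrite mulrBl -!mulrA hs !mulrA.
  rewrite -e1 st -frob; last by apply: commr_sym; apply: ts_c.
  by rewrite -exprM hC subrr.
have rs_uniq : uniq rs.
  rewrite map_inj_in_uniq // => t t' tt tt'; apply: qinj; exact: ts_c.
have P0 : P = 0.
  apply/eqP; apply/negPn/negP => Pn0.
  have := max_ring_poly_roots Pn0 Proot (@uniq_roots_central R hdiv rs rs_uniq rs_c).
  rewrite size_map; have := size_poly m.+1 E; rewrite -/P => h1 h2.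
  by have := leq_trans h2 h1; rewrite ltnS leqNgt ts_size.
have m_gt0 : (0 < m)%N by rewrite lt0n; apply: contraNneq m0 => ->.
have := congr1 (fun p : {poly R} => p`_(m - 1)) P0.
rewrite coef_poly coef0 /= ltnS leq_subr /E subKn // bin_sub // bin1 expr1.
rewrite -mulr_natl => /eqP; rewrite -(mulr0 (m%:R : R)) => /eqP /(mulrI (hdiv _ m0)).
by move/eqP; rewrite subr_eq0 => /eqP.
Qed.

Lemma caseI (a b0 : R) : a * b0 = b0 * a.
Proof.
case: (eqVneq (a * b0) (b0 * a)) => // nab; exfalso.
have a0 : a != 0 by apply: contraNneq nab => ->; rewrite mul0r mulr0.
have db : ad a b0 != 0 by rewrite /ad subr_eq0.
have dq : iter q (ad a) b0 = 0 by rewrite adq /ad qcentral subrr.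
have q1 : (1 < q)%N.
  rewrite ltn_neqAle eq_sym q_gt0 andbT; apply: contra_neq db => q1.
  by move: dq; rewrite q1.
have ex : exists k, iter k.+2 (ad a) b0 == 0.
  exists q.-2; have q1' : (0 < q.-1)%N by rewrite -ltnS prednK.
  by rewrite prednK // prednK // dq.
case: (ex_minnP ex) => k /eqP Hk Hmin.
have c0 : ad a (iter k (ad a) b0) != 0.
  move: Hmin; case: k {Hk} => [//|k] Hmin.
  apply/negP => /eqP c0.
  by have := Hmin k (introT eqP c0); rewrite ltnn.
set y := iter k (ad a) b0 in Hk c0.
pose c := ad a y.
have cU := hdiv _ c0.
have ac : GRing.comm a c by apply/eqP; rewrite -subr_eq0; apply/eqP; exact: Hk.
pose x := c^-1 * y.
have ax : a * x = x * a + 1.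
  apply/eqP; rewrite -subr_eq eq_sym; apply/eqP.
  rewrite /x mulrA (commrV ac) -mulrA -mulrA.
  rewrite -(mulVr cU) -mulrBr; congr (_ * _); rewrite /c /ad opprB addrC subrK //.
pose u := x * a.
have au : a * u = (u + 1) * a by rewrite /u mulrA ax mulrDl mul1r.
have auk k' : a * u ^+ k' = (u + 1) ^+ k' * a.
  elim: k' => [|k' IH]; first by rewrite !expr0 mulr1 mul1r.
  by rewrite exprSr mulrA IH -mulrA au mulrA -exprSr.
have := auk q; rewrite frob; last exact: commr1.
rewrite expr1n mulrDl mul1r (qcentral u a) => /eqP.
rewrite -subr_eq0 opprD addrA subrr add0r oppr_eq0 => /eqP a00.
by rewrite a00 eqxx in a0.
Qed.

End CaseI.


Lemma char_prime (R : unitRingType) (hdiv : forall x : R, x != 0 -> x \is a GRing.unit)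
  n : (0 < n)%N -> n%:R = 0 :> R -> exists2 p, prime p & p%:R = 0 :> R.
Proof.
elim: n {-2}n (leqnn n) => [|N IH] n nN n_gt0 n0.
  by move: n_gt0; rewrite ltnNge nN.
case: (boolP (prime n)) => pn; first by exists n.
have n1 : (1 < n)%N.
  rewrite ltn_neqAle eq_sym n_gt0 andbT; apply/eqP => n1.
  by move: n0; rewrite n1 => /eqP; rewrite oner_eq0.
have dp := pdiv_prime n1; have dn := pdiv_dvd n.
case: (eqVneq ((pdiv n)%:R : R) 0) => [d0 | d0]; first by exists (pdiv n).
have d1 : (1 < pdiv n)%N by apply: prime_gt1.
have h1 : (n %/ pdiv n <= N)%N.
  by rewrite -ltnS (leq_trans _ nN) // ltn_Pdiv.
have h2 : (0 < n %/ pdiv n)%N by rewrite divn_gt0 ?prime_gt0 // dvdn_leq.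
have h3 : (n %/ pdiv n)%:R = 0 :> R.
  move: n0; rewrite -{1}(divnK dn) natrM => e.
  by apply: (mulIr (hdiv _ d0)); rewrite e mul0r.
exact: IH _ h1 h2 h3.
Qed.

Lemma conj_pow (R : unitRingType) (x y : R) k : y \is a GRing.unit ->
  (y^-1 * x * y) ^+ k = y^-1 * x ^+ k * y.
Proof.
move=> yU; elim: k => [|k IH]; first by rewrite !expr0 mulr1 mulVr.
rewrite exprS IH !mulrA mulrK // -!mulrA; congr (_ * _); rewrite !mulrA.
by rewrite -exprS.
Qed.

Theorem theorem2p1 (F : fieldType) (R : unitAlgType F)
  (hdiv : is_division_ring R) (hnc : noncommutative R) :
  forall n : nat, (0 < n)%N ->
    exists alpha beta : R, (alpha * beta) ^+ n != (beta * alpha) ^+ n.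
Proof.
move=> n n_gt0.
case: (classic (exists alpha beta : R, (alpha * beta) ^+ n != (beta * alpha) ^+ n))
  => // hno; exfalso.
have H : forall al be : R, (al * be) ^+ n = (be * al) ^+ n.
  by move=> al be; apply/eqP/negPn/negP => ne; apply: hno; exists al, be.
have hC : forall x y : R, x ^+ n * y = y * x ^+ n.
  move=> x y; case: (eqVneq y 0) => [-> | y0]; first by rewrite mulr0 mul0r.
  have yU := hdiv y y0.
  have := H y (y^-1 * x); rewrite mulVKr // conj_pow // => e.
  by rewrite [in RHS]e !mulrA mulrV // mul1r.
have [a [b nab]] := hnc.
suff comm : forall a b : R, a * b = b * a by move: nab; rewrite comm eqxx.
case: (classic (exists ts : seq R, [/\ uniq ts, size ts = n.+1 &
          forall t, t \in ts -> forall z, t * z = z * t]))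
  => [[ts [tu tsz tc]] | nts].
- case: (eqVneq (n%:R : R) 0) => [n0 | n0].
  + have [p pp p0] := @char_prime R hdiv n n_gt0 n0.
    have pc : p \in [pchar R] by apply/andP; split => //; apply/eqP.
    have [m cpm nE] := pfactor_coprime pp n_gt0.
    pose q := (p ^ logn p n)%N.
    have nE' : n = (m * q)%N by [].
    have q_gt0 : (0 < q)%N by rewrite expn_gt0 prime_gt0.
    have m0 : m%:R != 0 :> R by rewrite -(dvdn_pcharf pc) -prime_coprime.
    apply: (@caseI R hdiv q m q_gt0 (frob_iter pc (logn p n)) (@ad_iter R p pc (logn p n)) m0
               _ ts tu _ tc).
      by move=> x y; rewrite mulnC -nE'.
    by rewrite tsz ltnS [in X in (_ <= X)%N]nE' leq_pmulr.
  + apply: (@caseI R hdiv 1 n (ltn0Sn 0) _ _ n0 _ ts tu _ tc).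
    * by move=> x y _; rewrite !expr1.
    * by move=> a' w; rewrite expr1.
    * by move=> x y; rewrite mul1n.
    * by rewrite tsz.
have hN : forall x : R, x != 0 -> x ^+ (n * n`!) = 1.
  move=> x x0; have xU := hdiv x x0.
  pose ts := [seq x ^+ (n * i) | i <- iota 0 n.+1].
  have /uniqPn : ~~ uniq ts.
    apply/negP => tu; apply: nts; exists ts; split => //.
      by rewrite size_map size_iota.
    move=> t /mapP [i _ ->] z; rewrite exprM; apply: commr_sym; apply: commrX.
    exact/commr_sym/hC.
  move=> /(_ 0) [i [j [ij jn]]]; rewrite size_map size_iota in jn.
  rewrite !(nth_map 0) ?size_iota ?(ltn_trans ij) // !nth_iota ?(ltn_trans ij) //.
  rewrite !add0n => eij.
  have d_gt0 : (0 < j - i)%N by rewrite subn_gt0.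
  have e1 : x ^+ (n * (j - i)) = 1.
    apply: (mulrI (unitrX (n * i) xU)); rewrite mulr1 -exprD -mulnDr subnKC.
      exact: esym eij.
    exact: ltnW.
  have /dvdnP [k kE] : (j - i %| n`!)%N.
    apply: dvdn_fact; rewrite d_gt0 /= leq_subLR.
    by apply: (leq_trans _ (leq_addl i n)); rewrite -ltnS.
  by rewrite kE mulnCA mulnC exprM e1 expr1n.
have N_gt0 : (0 < n * n`!)%N by rewrite muln_gt0 n_gt0 fact_gt0.
have hN' : forall x : R, x != 0 -> x ^+ (n * n`!).-1.+1 = 1.
  by move=> x x0; rewrite prednK // hN.
have [p p_gt0 p0] : exists2 p, (0 < p)%N & p%:R = 0 :> R.
  case: (eqVneq (2%:R : R) 0) => [t0 | t0]; first by exists 2%N.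
  exists (2 ^ (n * n`!) - 1)%N.
    by rewrite subn_gt0 -{1}(expn0 2) ltn_exp2l.
  by rewrite natrB ?expn_gt0 // natrX hN // subrr.
exact: (@caseII R hdiv p _ p_gt0 p0 hN').
Qed.
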